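(* Let $P$ be a finite partial IP loop with $3\mid o_3(P)$. Then there exists a finite partial IP loop $Q\ge P$ satisfying all of: $3\mid o_3(Q)$, $\#Q\ge 10$, $\#Q\equiv 4\pmod 6$, and $\Gamma(Q)\subseteq O_2(Q)\times O_2(Q)$.
   Context: A partial IP loop is a set $P$ with a partial binary operation $(x,y)\mapsto xy$ defined on a subset $D(P)\subseteq P\times P$ (the domain) such that: (1) there is $1\in P$ with $(1,x),(x,1)\in D(P)$ and $1x=x1=x$ for all $x\in P$; (2) for each $x\in P$ there is a unique $y\in P$, denoted $x^{-1}$, with $(x,y),(y,x)\in D(P)$ and $xy=yx=1$; (3) whenever $(x,y)\in D(P)$, we have $(x^{-1},xy),(xy,y^{-1})\in D(P)$ and $x^{-1}(xy)=y$, $(xy)y^{-1}=x$. A partial IP loop $(Q,* )$ extends $(P,\cdot)$ (written $P\le Q$) if $P\subseteq Q$, $D(P)\subseteq D(Q)$ and $x\cdot y=x*y$ for all $(x,y)\in D(P)$. The set of gaps is $\Gamma(P)=(P\times P)\setminus D(P)$. $O_2(P)=\{x\in P: (x,x)\in D(P),\ x\ne 1,\ xx=1\}$; $O_3(P)=\{x\in P: (x,x)\in D(P),\ (x,xx)\in D(P),\ x\neq 1,\ x(xx)=1\}$ and $o_3(P)=\#O_3(P)$. *)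

(* Defs.v *)
From mathcomp Require Import all_boot.
Set Implicit Arguments. Unset Strict Implicit. Unset Printing Implicit Defensive.

(* A partial binary operation on a finite carrier T is op : T -> T -> option T;
   (x,y) \in D(P) iff op x y <> None, and then xy is the value. *)

Definition in_dom (T : Type) (op : T -> T -> option T) (x y : T) : Prop :=
  exists z, op x y = Some z.

Definition is_inv (T : Type) (op : T -> T -> option T) (e x y : T) : Prop :=
  op x y = Some e /\ op y x = Some e.

Definition partial_IP_loop (T : Type) (op : T -> T -> option T) (e : T) : Prop :=
  (forall x, op e x = Some x /\ op x e = Some x) /\
  (forall x, exists y, is_inv op e x y /\ forall y', is_inv op e x y' -> y' = y) /\
  (forall x y z, op x y = Some z ->
     (forall x', is_inv op e x x' -> op x' z = Some y) /\
     (forall y', is_inv op e y y' -> op z y' = Some x)).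

Definition extends (T U : Type) (opP : T -> T -> option T)
    (opQ : U -> U -> option U) (f : T -> U) : Prop :=
  injective f /\
  forall x y z, opP x y = Some z -> opQ (f x) (f y) = Some (f z).

Definition O2 (T : finType) (op : T -> T -> option T) (e : T) : {set T} :=
  [set x | (x != e) && (op x x == Some e)].

Definition O3 (T : finType) (op : T -> T -> option T) (e : T) : {set T} :=
  [set x | (x != e) &&
     (match op x x with
      | Some xx => op x xx == Some e
      | None => false
      end)].

Definition o3 (T : finType) (op : T -> T -> option T) (e : T) : nat :=
  #|O3 op e|.

Definition gaps_in_O2 (T : finType) (op : T -> T -> option T) (e : T) : Prop :=
  forall x y, op x y = None -> x \in O2 op e /\ y \in O2 op e.

(* Main.v *)
Require Import Defs.
From mathcomp Require Import all_boot.
From mathcomp Require Import all_algebra zify.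
Set Implicit Arguments. Unset Strict Implicit. Unset Printing Implicit Defensive.

Section Ploop.
Variables (T : finType) (op : T -> T -> option T) (e : T).
Hypothesis HP : partial_IP_loop op e.

Definition pinv x := odflt x [pick y | (op x y == Some e) && (op y x == Some e)].

Lemma inv_is x : is_inv op e x (pinv x).
Proof.
rewrite /pinv; case: pickP => [y /andP[/eqP H1 /eqP H2] | H] //=.
case: HP => _ [/(_ x) [y [[H1 H2] _]] _].
by move: (H y); rewrite H1 H2 !eqxx.
Qed.

Lemma inv_uniq x y : is_inv op e x y -> y = pinv x.
Proof.
case: HP => _ [/(_ x) [z [Hz Hu]] _] Hy.
by rewrite (Hu _ Hy) (Hu _ (inv_is x)).
Qed.

Lemma op_inv x : op x (pinv x) = Some e.
Proof. by case: (inv_is x). Qed.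
Lemma op_invl x : op (pinv x) x = Some e.
Proof. by case: (inv_is x). Qed.

Lemma invK x : pinv (pinv x) = x.
Proof. by apply/esym/inv_uniq; split; [apply: op_invl | apply: op_inv]. Qed.

Lemma inv_inj : injective pinv.
Proof. exact: can_inj invK. Qed.

Lemma opex x : op e x = Some x. Proof. by case: HP => /(_ x) []. Qed.
Lemma opxe x : op x e = Some x. Proof. by case: HP => /(_ x) []. Qed.

Lemma inve : pinv e = e.
Proof. by apply/esym/inv_uniq; split; apply: opex. Qed.

Lemma inv_eqe x : (pinv x == e) = (x == e).
Proof.
apply/eqP/eqP => [H|->]; last exact: inve.
by rewrite -(invK x) H inve.
Qed.

Lemma ip1 x y z : op x y = Some z -> op (pinv x) z = Some y.
Proof. by case: HP => _ [_ H] /H [H1 _]; apply: H1; apply: inv_is. Qed.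

Lemma ip2 x y z : op x y = Some z -> op z (pinv y) = Some x.
Proof. by case: HP => _ [_ H] /H [_ H1]; apply: H1; apply: inv_is. Qed.

Lemma gap_sym p q : op p q = None -> op (pinv q) (pinv p) = None.
Proof.
move=> Hpq; case Hw: (op (pinv q) (pinv p)) => [w|] //.
move/ip2: Hw; rewrite invK => /ip1 /ip2.
by rewrite invK Hpq.
Qed.

Lemma gap_ne p q : op p q = None -> [/\ p != e, q != e & q != pinv p].
Proof.
move=> H; split; apply/eqP => E; move: H; rewrite E.
- by rewrite opex.
- by rewrite opxe.
- by rewrite op_inv.
Qed.

Lemma op_uniq_e x y : op x y = Some e -> y = pinv x.
Proof.
by move/ip2; rewrite opex => -[<-]; rewrite invK.
Qed.

End Ploop.


Section Ext.
Variables (T S : finType) (op : T -> T -> option T) (e : T).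
Hypothesis HP : partial_IP_loop op e.
Variables (fill : T -> T -> S) (R : T -> S -> option (T + S)).
Local Notation inv := (pinv op e).
Hypothesis R1 : forall a s t, a != e -> R a s = Some (inr t) -> R (inv a) t = Some (inr s).
Hypothesis R2 : forall a s b, a != e -> R a s = Some (inl b) ->
  [/\ op a (inv b) = None, s = fill a (inv b) & R b s = Some (inl a)].
Hypothesis R3 : forall p q, op p q = None -> R p (fill p q) = Some (inl (inv q)).
Hypothesis R4 : forall p q, op p q = None -> fill p q = fill (inv q) (inv p).
Hypothesis R5 : forall a b s t, a != e -> b != e -> R a s = Some (inr t) -> R b s = Some (inr t) -> a = b.
Hypothesis R5' : forall a s t, a != e -> R a s = Some (inr t) -> t != s.
Hypothesis R6 : forall a s, a != e -> R a s = None -> op a a = Some e.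

Let invK := invK HP.
Let inve := inve HP.
Let inv_eqe := inv_eqe HP.
Let opex := opex HP.
Let opxe := opxe HP.

Definition invU (u : T + S) : T + S := match u with inl a => inl (inv a) | inr s => inr s end.

Definition opU (u v : T + S) : option (T + S) :=
  match u, v with
  | inl a, inl b => match op a b with Some c => Some (inl c) | None => Some (inr (fill a b)) end
  | inl a, inr s => if a == e then Some (inr s) else omap invU (R (inv a) s)
  | inr s, inl a => if a == e then Some (inr s) else R a s
  | inr s, inr t => if s == t then Some (inl e)
                    else omap inl [pick a | (a != e) && (R a s == Some (inr t))]
  end.

Lemma R2b a s b : a != e -> R a s = Some (inl b) -> b != e.
Proof.
move=> Ha H; case: (R2 Ha H) => Hg _ _; apply/eqP => Eb; move: Hg.
by rewrite Eb inve opxe.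
Qed.

Lemma pickR a s t : a != e -> R a s = Some (inr t) ->
  [pick a' | (a' != e) && (R a' s == Some (inr t))] = Some a.
Proof.
move=> Ha H; case: pickP => [a' /andP[Ha' /eqP H'] | H0].
  by congr Some; exact: R5 Ha' Ha H' H.
by move: (H0 a); rewrite Ha H eqxx.
Qed.

Lemma invUK u : invU (invU u) = u.
Proof. by case: u => //= a; rewrite invK. Qed.

Lemma invne a : a != e -> inv a != e.
Proof. by rewrite inv_eqe. Qed.

Lemma opU_main u v w : opU u v = Some w -> opU (invU u) w = Some v /\ opU w (invU v) = Some u.
Proof.
case: u => [a|s]; case: v => [b|t] /=.
- case Hab: (op a b) => [c|] [<-] /=.
    by rewrite (ip1 HP Hab) (ip2 HP Hab).
  case: (gap_ne HP Hab) => Ha Hb _.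
  rewrite (negbTE (invne Ha)) (negbTE (invne Hb)) invK R3 //=; split; first by rewrite invK.
  by rewrite (R4 Hab) R3 ?invK //; apply: gap_sym.
- case: eqP => [-> [<-]|/eqP Ha].
    by rewrite /= inve !eqxx.
  case HR: (R (inv a) t) => [[b|s']|] //= [<-] /=.
    have Hia := invne Ha.
    case: (R2 Hia HR) => Hg Ht HRb.
    have Hb := R2b Hia HR.
    rewrite Hg -Ht (negbTE (invne Hb)) invK HRb /= invK; split => //.
  rewrite (negbTE (invne Ha)) invK.
  have HR' := R1 (invne Ha) HR; rewrite invK in HR'.
  have -> : (s' == t) = false by rewrite eq_sym; apply/negbTE/(R5' Ha HR').
  by rewrite HR' /= (pickR Ha HR').

- case: eqP => [-> [<-]|/eqP Ha].
    by rewrite /= inve !eqxx.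
  case HR: (R b s) => [[c|s']|] //= [<-] /=.
    case: (R2 Ha HR) => Hg Ht HRb.
    have Hc := R2b Ha HR.
    rewrite (negbTE Hc) HRb; split => //.
    have Hg' := gap_sym HP Hg; rewrite invK in Hg'.
    by rewrite Hg' Ht (R4 Hg) invK.
  have -> : (s == s') = false by rewrite eq_sym; apply/negbTE/(R5' Ha HR).
  by rewrite (pickR Ha HR) /= (negbTE (invne Ha)) (R1 Ha HR).
- case: eqP => [-> [<-]|/eqP Hst].
    by rewrite /= !eqxx.
  case: pickP => [a /andP[Ha /eqP HR]|] //= [<-] /=.
  by rewrite (negbTE Ha) HR (R1 Ha HR).
Qed.

Lemma invU_uniq u v : is_inv opU (inl e) u v -> v = invU u.
Proof.
case: u => [a|s]; case: v => [b|t]; rewrite /is_inv /= => -[H1 H2].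
- move: H1 H2; case H1: (op a b) => [c|] // [Ec]; case H2: (op b a) => [d|] // [Ed].
  subst; by rewrite -(inv_uniq HP (conj H1 H2)).
- move: H1; case: eqP => // /eqP Ha.
  case HR: (R (inv a) t) => [[c|s']|] //= [Ec].
  by move: (R2b (invne Ha) HR); rewrite -inv_eqe Ec eqxx.
- move: H1; case: eqP => // /eqP Ha.
  by move=> HR; move: (R2b Ha HR); rewrite eqxx.
- move: H1; case: eqP => [->//|/eqP Hst].
  by case: pickP => [a /andP[Ha _]|] //= [Ea]; move: Ha; rewrite Ea eqxx.
Qed.

Theorem ext_loop : partial_IP_loop opU (inl e).
Proof.
split; [|split].
- by case=> [a|s] /=; rewrite ?opex ?opxe ?eqxx.
- move=> u; exists (invU u); split; last by move=> y /invU_uniq.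
  case: u => [a|s] /=; first by rewrite /is_inv /= (op_inv HP) (op_invl HP).
  by rewrite /is_inv /= eqxx.
- move=> u v w H; have [H1 H2] := opU_main H; split => x' /invU_uniq ->; by [].
Qed.


Lemma ext_extends : extends op opU inl.
Proof.
split; first by move=> x y [].
by move=> x y z /= ->.
Qed.

Lemma ext_gaps : gaps_in_O2 opU (inl e).
Proof.
have inS s : inr s \in O2 opU (inl e) by rewrite inE /= eqxx.
have inT a : a != e -> op a a = Some e -> inl a \in O2 opU (inl e).
  by move=> Ha H; rewrite inE /= H eqxx andbT.
case=> [a|s]; case=> [b|t] /=.
- by case: (op a b).
- case: eqP => // /eqP Ha.
  case HR: (R (inv a) t) => [w|] // _; split => //.
  have E := op_uniq_e HP (R6 (invne Ha) HR); rewrite invK in E.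
  by apply: inT => //; rewrite -{2}E (op_inv HP).
- case: eqP => // /eqP Ha HR; split => //; exact: inT Ha (R6 Ha HR).
- by move=> _; split.
Qed.

Lemma ext_O3 : o3 opU (inl e) = o3 op e.
Proof.
rewrite /o3.
suff -> : O3 opU (inl e) = inl @: O3 op e by rewrite card_imset //; move=> x y [].
apply/setP => -[a|s]; rewrite !inE /=.
- apply/idP/imsetP => [|[a' Ha' [->]]].
    case/andP => Ha; have Ha1 : a != e by apply: contra Ha => /eqP ->.
    case Haa: (op a a) => [c|].
      case Hac: (op a c) => [d|] //= /eqP [Hd].
      by exists a => //; rewrite !inE Ha1 Haa Hac Hd eqxx.
    rewrite (negbTE Ha1); case HR: (R (inv a) (fill a a)) => [[b|s']|] //= /eqP [Eb].
    by move: (R2b (invne Ha1) HR); rewrite -inv_eqe Eb eqxx.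
  move: Ha'; rewrite !inE => /andP[Ha]; case Haa: (op a' a') => [c|] // /eqP Hac.
  rewrite Hac eqxx andbT; by apply: contra Ha => /eqP [->].
  rewrite eqxx /= eqxx /=; apply/esym/imsetP => -[x _ //].
Qed.

End Ext.


Section Bij.
Variable T : finType.
Definition bij (A B : {set T}) (x : T) := nth x (enum B) (index x (enum A)).
Lemma bijP (A B : {set T}) x : #|A| = #|B| -> x \in A ->
  bij A B x \in B /\ bij B A (bij A B x) = x.
Proof.
move=> HAB Hx; rewrite /bij.
have xA : x \in enum A by rewrite mem_enum.
have Hi : index x (enum A) < size (enum B) by rewrite -cardE -HAB cardE index_mem.
have yB : nth x (enum B) (index x (enum A)) \in enum B by apply: mem_nth.
split; first by rewrite -mem_enum.
rewrite index_uniq ?enum_uniq //.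
rewrite (set_nth_default x); first by rewrite nth_index.
by rewrite -cardE HAB cardE.
Qed.
End Bij.

Section Orb.
Variables (T : finType) (op : T -> T -> option T) (e : T).
Hypothesis HP : partial_IP_loop op e.
Local Notation inv := (pinv op e).
Let invK := invK HP.

Definition tau (g : T * T) := (inv g.2, inv g.1).
Definition isorb (A : {set (T * T)}) :=
  [exists g : T * T, (op g.1 g.2 == None) && (A == [set g; tau g])].
Definition inA (J : finType) (j : {set (T * T)} + J) p q :=
  match j with inl A => isorb A && ((p, q) \in A) | inr _ => false end.
Definition orb (J : finType) p q : {set (T * T)} + J := inl [set (p, q); tau (p, q)].

Lemma tauK g : tau (tau g) = g.
Proof. by case: g => p q; rewrite /tau /= !invK. Qed.

Lemma tau_gap g : op g.1 g.2 = None -> op (tau g).1 (tau g).2 = None.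
Proof. by case: g => p q /= H; apply: gap_sym. Qed.

Lemma inA_cases (J : finType) (j : {set (T * T)} + J) p q :
  inA j p q -> exists2 g, op g.1 g.2 = None & j = inl [set g; tau g] /\ ((p, q) = g \/ (p, q) = tau g).
Proof.
case: j => [A|//] /andP[/existsP[g /andP[/eqP Hg /eqP ->]]].
by rewrite !inE => /orP[/eqP ->|/eqP ->]; exists g; auto.
Qed.

Lemma inA_gap (J : finType) (j : {set (T * T)} + J) p q : inA j p q -> op p q = None.
Proof.
move=> H; case: (inA_cases H) => -[g1 g2] Hg [_ [[-> ->]|E]] //.
by have := tau_gap Hg; rewrite -E.
Qed.

Lemma orb_inA (J : finType) p q : op p q = None -> inA (orb J p q) p q.
Proof.
move=> H; rewrite /= !inE eqxx andbT; apply/existsP; exists (p, q).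
by rewrite /= H !eqxx.
Qed.

Lemma orbC (J : finType) p q : orb J p q = orb J (inv q) (inv p).
Proof. by rewrite /orb /tau /= !invK setUC. Qed.

Lemma inA_orb (J : finType) (j : {set (T * T)} + J) p q : inA j p q -> j = orb J p q.
Proof.
case/inA_cases => g Hg [-> [E|E]]; rewrite /orb E //.
by rewrite tauK setUC.
Qed.

Lemma inA_sym (J : finType) (j : {set (T * T)} + J) p q : inA j p q -> inA j (inv q) (inv p).
Proof.
move=> H; have Hg := inA_gap H; rewrite (inA_orb H) orbC.
by apply: orb_inA; apply: gap_sym.
Qed.

Lemma inA_fst (J : finType) (j : {set (T * T)} + J) p q q' : inA j p q -> inA j p q' -> q = q'.
Proof.
move=> H1 H2; have Hg := inA_gap H1; have := inA_orb H2; rewrite (inA_orb H1) => -[E].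
have : (p, q') \in [set (p, q); tau (p, q)] by rewrite E; apply/set2P; left.
case/set2P => [[->]//|[E1 E2]].
by move: Hg; rewrite E1 (op_invl HP).
Qed.

Lemma inA_snd (J : finType) (j : {set (T * T)} + J) p p' q : inA j p q -> inA j p' q -> p = p'.
Proof.
move=> H1 H2; have Hg := inA_gap H1; have := inA_orb H2; rewrite (inA_orb H1) => -[E].
have : (p', q) \in [set (p, q); tau (p, q)] by rewrite E; apply/set2P; left.
case/set2P => [[->]//|[E1 E2]].
by move: Hg; rewrite E2 (op_inv HP).
Qed.

Definition Dset a := [set d | op d a == None].
Definition sig a d := bij (Dset a) (Dset (inv a)) d.

Lemma Dcard_le a : #|Dset a| <= #|Dset (inv a)|.
Proof.
suff : #|~: Dset a| >= #|~: Dset (inv a)|.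
  by move=> H; rewrite (cardsCs (Dset a)) (cardsCs (Dset (inv a))) leq_sub2l.
pose g d := odflt e (op d (inv a)).
have Hinj : {in ~: Dset (inv a) &, injective g}.
  move=> x y; rewrite !inE /g; case Hx: (op x (inv a)) => [u|] //; case Hy: (op y (inv a)) => [w|] //= _ _ E.
  subst w; have := ip2 HP Hx; have := ip2 HP Hy; by rewrite !invK => -> [->].
rewrite -(card_in_imset Hinj); apply: subset_leq_card; apply/subsetP => z /imsetP[x].
rewrite !inE /g; case Hx: (op x (inv a)) => [u|] //= _ ->.
by have := ip2 HP Hx; rewrite invK => ->.
Qed.

Lemma Dcard a : #|Dset a| = #|Dset (inv a)|.
Proof. by apply/eqP; rewrite eqn_leq Dcard_le /= -{2}(invK a) Dcard_le. Qed.

Lemma sig_gap a d : op d a = None -> op (sig a d) (inv a) = None.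
Proof.
move=> H; have Hd : d \in Dset a by rewrite inE H.
by case: (bijP (Dcard a) Hd); rewrite inE => /eqP.
Qed.

Lemma sigK a d : op d a = None -> sig (inv a) (sig a d) = d.
Proof.
move=> H; have Hd : d \in Dset a by rewrite inE H.
by rewrite /sig invK; case: (bijP (Dcard a) Hd).
Qed.

End Orb.

Import GRing.Theory.

Section Cv.
Variable kk : nat.
Hypothesis kk_gt1 : 1 < kk.

Definition sgnZ (s : bool) (a : nat) : 'Z_kk := if s then (a%:R)%R else (- a%:R)%R.

Lemma natZ a b : a < kk -> b < kk -> (a%:R : 'Z_kk)%R = (b%:R)%R -> a = b.
Proof.
move=> Ha Hb E; have := congr1 (@nat_of_ord _) E; rewrite !val_Zp_nat // !modn_small //.
Qed.

Lemma sgnZ_inj s1 s2 a b : a + b < kk -> 0 < a + b -> sgnZ s1 a = sgnZ s2 b -> s1 = s2 /\ a = b.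
Proof.
move=> Hab Hp.
have Ha : a < kk by apply: leq_ltn_trans Hab; apply: leq_addr.
have Hb : b < kk by apply: leq_ltn_trans Hab; apply: leq_addl.
have nz : ((a + b)%:R : 'Z_kk)%R != 0%R.
  by apply/eqP => /(natZ Hab (ltn_trans (ltnSn 0) kk_gt1)) E; move: Hp; rewrite E.
case: s1; case: s2; rewrite /sgnZ => E.
- by split => //; apply: natZ.
- by move: nz; rewrite natrD E addNr eqxx.
- by move: nz; rewrite natrD -E addrN eqxx.
- by split => //; apply: natZ => //; apply: oppr_inj.
Qed.

Lemma sgnZN s a : (- sgnZ s a)%R = sgnZ (~~ s) a.
Proof. by case: s; rewrite /sgnZ ?opprK. Qed.

Lemma sgnZD s a : (sgnZ s a + sgnZ s a)%R = sgnZ s (a + a).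
Proof. by case: s; rewrite /sgnZ natrD // opprD. Qed.

End Cv.

Import GRing.Theory.

Section Main.
Variables (T : finType) (op : T -> T -> option T) (e : T).
Hypothesis HP : partial_IP_loop op e.
Local Notation inv := (pinv op e).
Let invK := invK HP.

Definition kk := (6 * (4 * #|T| + 4)).+1.
Lemma kk_gt1 : 1 < kk. Proof. by rewrite /kk ltnS muln_gt0 /= addn4. Qed.

Definition rk (x : T) : nat := enum_rank x.
Definition sg x := rk x < rk (inv x).
Definition uu x := 4 * minn (rk x) (rk (inv x)) + 1.
Definition cc x : 'Z_kk := sgnZ kk (sg x) (uu x).

Definition X a := (a != e) && (op a a != Some e).

Lemma X_ne a : X a -> a != e. Proof. by case/andP. Qed.

Lemma X_inv_ne a : X a -> inv a != a.
Proof.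
case/andP => _ Haa; apply/eqP => E; move: Haa; rewrite -{2}E.
by rewrite (op_inv HP) eqxx.
Qed.

Lemma X_inv a : X a -> X (inv a).
Proof.
move=> Ha; have Hne := X_inv_ne Ha; rewrite /X (inv_eqe HP) (X_ne Ha) /=.
apply/eqP => E; move: (op_uniq_e HP E); rewrite invK => E'.
by move: Hne; rewrite E' eqxx.
Qed.

Lemma rk_lt x : rk x < #|T|. Proof. exact: ltn_ord. Qed.

Lemma uu_lt x : uu x < 4 * #|T| + 1.
Proof.
rewrite /uu ltn_add2r ltn_pmul2l //.
by apply: leq_ltn_trans (geq_minl _ _) (rk_lt x).
Qed.

Lemma uu_inv x : uu (inv x) = uu x.
Proof. by rewrite /uu invK minnC. Qed.

Lemma rk_inv_ne a : X a -> rk a != rk (inv a).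
Proof.
move=> Ha; apply/eqP => E; have := X_inv_ne Ha.
by move/eqP; apply; symmetry; apply: enum_rank_inj; apply: val_inj.
Qed.

Lemma sg_inv a : X a -> sg (inv a) = ~~ sg a.
Proof.
move=> Ha; rewrite /sg invK; have := rk_inv_ne Ha.
by case: ltngtP.
Qed.

Lemma C1 a : X a -> cc (inv a) = (- cc a)%R.
Proof. by move=> Ha; rewrite /cc sgnZN sg_inv // uu_inv. Qed.

Lemma sum_lt x y : uu x + uu y < kk.
Proof.
have := uu_lt x; have := uu_lt y; rewrite /kk; lia.
Qed.
Lemma sum3_lt x y : uu x + (uu y + uu y) < kk.
Proof.
have := uu_lt x; have := uu_lt y; rewrite /kk; lia.
Qed.

Lemma C2 a b : X a -> X b -> cc a = cc b -> a = b.
Proof.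
move=> Ha Hb /(sgnZ_inj kk_gt1 (sum_lt a b)) [].
  by rewrite /uu addn1 addnS.
rewrite /uu => Es /eqP; rewrite eqn_add2r eqn_pmul2l // => /eqP Em.
move: Es Em; rewrite /sg; case: (ltnP (rk a) (rk (inv a))) => Hla; case: (ltnP (rk b) (rk (inv b))) => Hlb //= _.
- by move=> E; exact: (enum_rank_inj (val_inj E)).
- move=> E; rewrite -(invK a) -(invK b); congr inv; exact: (enum_rank_inj (val_inj E)).
Qed.

Lemma C3 a b : X a -> X b -> cc a != (cc b + cc b)%R.
Proof.
move=> Ha Hb; apply/eqP; rewrite /cc sgnZD => /(sgnZ_inj kk_gt1 (sum3_lt a b)) [].
  by rewrite /uu addn1 addnS.
move=> _ /(congr1 odd); rewrite /uu addnn odd_double oddD oddM /=.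
by [].
Qed.

Lemma C0 a : X a -> cc a != 0%R.
Proof.
move=> Ha; apply/eqP => E.
have : sgnZ kk (sg a) (uu a) = sgnZ kk true 0 by rewrite -/(cc a) E /sgnZ mulr0n.
have H1 : uu a + 0 < kk by have := sum_lt a a; lia.
move/(sgnZ_inj kk_gt1 H1) => [].
  by rewrite /uu addn0 addn1.
by move=> _; rewrite /uu addn1.
Qed.


Definition rr := (4 + 5 * (#|T| + #|{set (T * T)}|)) %% 6.
Definition SS := (({set (T * T)} + 'I_rr) * 'Z_kk)%type.
Local Notation inA := (@inA _ op e 'I_rr).
Local Notation orb := (orb op e 'I_rr).
Local Notation sig := (sig op e).

Definition fillQ p q : SS := (orb p q, 0%R).
Definition Rt a (j : {set (T * T)} + 'I_rr) (n : 'Z_kk) : option (T + SS) :=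
  if ~~ X a then None else
  match [pick d | inA j d a] with
  | Some d => if n == (- cc a)%R then Some (inr (orb (sig a d) (inv a), cc a))
              else Some (inr (j, (n + cc a)%R))
  | None => Some (inr (j, (n + cc a)%R))
  end.
Definition RQ a (s : SS) : option (T + SS) :=
  match [pick b | inA s.1 a b] with
  | Some b => if s.2 == 0%R then Some (inl (inv b)) else Rt a s.1 s.2
  | None => Rt a s.1 s.2
  end.

Lemma pick_fst j p q : inA j p q -> [pick b | inA j p b] = Some q.
Proof.
move=> H; case: pickP => [b Hb|Hn]; first by congr Some; exact: (inA_fst HP Hb H).
by move: (Hn q); rewrite H.
Qed.

Lemma pick_snd j d a : inA j d a -> [pick d' | inA j d' a] = Some d.
Proof.
move=> H; case: pickP => [b Hb|Hn]; first by congr Some; exact: (inA_snd HP Hb H).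
by move: (Hn d); rewrite H.
Qed.

Definition crossP a j n := exists d, inA j d a /\ n = (- cc a)%R.
Definition fillP a j (n : 'Z_kk) := n = 0%R /\ exists b, inA j a b.

Lemma Rt_cases a j n t : Rt a j n = Some (inr t) -> X a /\ ((exists d, [/\ inA j d a, n = (- cc a)%R & t = (orb (sig a d) (inv a), cc a)]) \/
   (t = (j, (n + cc a)%R) /\ ~ crossP a j n)).
Proof.
rewrite /Rt; case: (boolP (X a)) => Ha //= H; split => //; move: H.
case: pickP => [d Hd|Hnd].
  case: eqP => [Hn [<-] | Hn [<-]]; first by left; exists d.
  by right; split => // -[d' [_ Hn']].
by move=> [<-]; right; split => // -[d' [Hd' _]]; move: (Hnd d'); rewrite Hd'.
Qed.

Lemma Rt_inl a j n b : Rt a j n <> Some (inl b).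
Proof.
rewrite /Rt; case: (X a) => //=; case: pickP => [d _|_] //; by case: eqP.
Qed.

Lemma RQ_cases a j n t : RQ a (j, n) = Some (inr t) -> X a /\ ((exists d, [/\ inA j d a, n = (- cc a)%R & t = (orb (sig a d) (inv a), cc a)]) \/
   (t = (j, (n + cc a)%R) /\ ~ crossP a j n /\ ~ fillP a j n)).
Proof.
rewrite /RQ /=; case: pickP => [b Hb|Hnb].
  case: eqP => [//|Hn] /Rt_cases [Ha [H|[H1 H2]]]; split => //; first by left.
  by right; split => //; split => // -[].
move/Rt_cases => [Ha [H|[H1 H2]]]; split => //; first by left.
by right; split => //; split => // -[_ [b Hb]]; move: (Hnb b); rewrite Hb.
Qed.

Lemma RQ_trans a j n : X a -> ~ fillP a j n -> ~ crossP a j n ->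
  RQ a (j, n) = Some (inr (j, (n + cc a)%R)).
Proof.
move=> Ha Hf Hc.
have HRt : Rt a j n = Some (inr (j, (n + cc a)%R)).
  rewrite /Rt Ha /=; case: pickP => [d Hd|//].
  by case: eqP => // Hn; case: Hc; exists d.
rewrite /RQ /=; case: pickP => [b Hb|_]; last exact: HRt.
case: eqP => [Hn|_]; last exact: HRt.
by case: Hf; split => //; exists b.
Qed.

Lemma RQ_cross a j n d : X a -> inA j d a -> n = (- cc a)%R ->
  RQ a (j, n) = Some (inr (orb (sig a d) (inv a), cc a)).
Proof.
move=> Ha Hd Hn.
have HRt : Rt a j n = Some (inr (orb (sig a d) (inv a), cc a)).
  by rewrite /Rt Ha /= (pick_snd Hd) Hn eqxx.
rewrite /RQ /=; case: pickP => [b Hb|_]; last exact: HRt.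
case: eqP => [Hn0|_]; last exact: HRt.
by move: (C0 Ha); rewrite -oppr_eq0 -Hn Hn0 eqxx.
Qed.

Lemma RQ_fill a j b : inA j a b -> RQ a (j, 0%R) = Some (inl (inv b)).
Proof. by move=> H; rewrite /RQ /= (pick_fst H). Qed.


Lemma QR1 a s t : a != e -> RQ a s = Some (inr t) -> RQ (inv a) t = Some (inr s).
Proof.
case: s => j n _ /RQ_cases [Ha [[d [Hd Hn ->]] | [-> [Hc Hf]]]].
  have Hg := inA_gap HP Hd.
  have Hi := sig_gap HP Hg.
  have Hj' := orb_inA e 'I_rr Hi.
  rewrite (RQ_cross (X_inv Ha) Hj'); last by rewrite C1 // opprK.
  by rewrite (sigK HP Hg) invK C1 // -Hn -(inA_orb HP Hd).
rewrite RQ_trans.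
- by rewrite C1 // addrK.
- exact: X_inv.
- move=> [Hn0 [b Hb]]; apply: Hc; exists (pinv op e b).
  split; first by have := inA_sym HP Hb; rewrite invK.
  by apply/eqP; rewrite -addr_eq0; apply/eqP.
- move=> [d [Hd Hn']]; apply: Hf; split.
    by apply: (@addIr _ (cc a)); rewrite Hn' C1 // opprK add0r.
  by exists (pinv op e d); have := inA_sym HP Hd; rewrite invK.
Qed.

Lemma QR5 a b s t : a != e -> b != e -> RQ a s = Some (inr t) -> RQ b s = Some (inr t) -> a = b.
Proof.
case: s => j n _ _ /RQ_cases [Ha Ca] /RQ_cases [Hb Cb].
case: Ca => [[d [Hd Hn Et]] | [Et [Hc Hf]]]; case: Cb => [[d' [Hd' Hn' Et']] | [Et' [Hc' Hf']]];
  have E := etrans (esym Et) Et'.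
- by case: E => _ /(C2 Ha Hb).
- by case: E => _ E; have := C3 Hb Ha; rewrite {2}E Hn addNKr eqxx.
- by case: E => _ E; have := C3 Ha Hb; rewrite -{2}E Hn' addNKr eqxx.
- by have := congr1 snd E => /= /addrI /(C2 Ha Hb).
Qed.

Lemma QR5' a s t : a != e -> RQ a s = Some (inr t) -> t != s.
Proof.
case: s => j n _ /RQ_cases [Ha [[d [Hd Hn ->]] | [-> _]]]; apply/eqP => -[].
  move=> _ E; have E2 : cc (inv a) = cc a by rewrite C1 // -Hn -E.
  by move: (X_inv_ne Ha); rewrite (C2 (X_inv Ha) Ha E2) eqxx.
move=> E; move: (C0 Ha); rewrite -(addrI n (etrans E (esym (addr0 n)))) eqxx //.
Qed.

Lemma QR2 a s b : a != e -> RQ a s = Some (inl b) ->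
  [/\ op a (pinv op e b) = None, s = fillQ a (pinv op e b) & RQ b s = Some (inl a)].
Proof.
case: s => j n _; rewrite /RQ /=; case: pickP => [b0 Hb0|_]; last by move/Rt_inl.
case: eqP => [Hn0 [<-]|_ /Rt_inl //].
rewrite invK (inA_gap HP Hb0); split => //; first by rewrite /fillQ Hn0 (inA_orb HP Hb0).
by rewrite (pick_fst (inA_sym HP Hb0)) invK.
Qed.

Lemma QR3 p q : op p q = None -> RQ p (fillQ p q) = Some (inl (pinv op e q)).
Proof. by move=> H; apply: RQ_fill; apply: (orb_inA e 'I_rr). Qed.

Lemma QR4 p q : op p q = None -> fillQ p q = fillQ (pinv op e q) (pinv op e p).
Proof. by move=> H; rewrite /fillQ (orbC HP 'I_rr). Qed.

Lemma QR6 a s : a != e -> RQ a s = None -> op a a = Some e.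
Proof.
case: s => j n Ha; case: (boolP (X a)) => HX.
  have HRt : Rt a j n <> None.
    by rewrite /Rt HX /=; case: pickP => [d _|_] //; case: eqP.
  by rewrite /RQ /=; case: pickP => [b _|_] //; case: eqP.
by move=> _; move: HX; rewrite /X Ha /= negbK => /eqP.
Qed.

End Main.


Theorem proposition2 (T : finType) (op : T -> T -> option T) (e : T) :
  partial_IP_loop op e ->
  (3 %| o3 op e)%N ->
  exists (U : finType) (opQ : U -> U -> option U) (eQ : U) (f : T -> U),
    partial_IP_loop opQ eQ /\
    extends op opQ f /\
    (3 %| o3 opQ eQ)%N /\
    (10 <= #|U|)%N /\
    (#|U| %% 6 = 4)%N /\
    gaps_in_O2 opQ eQ.
Proof.
move=> HP H3.
exists (T + SS T)%type, (opU op e (fillQ op e) (RQ op e)), (inl e), inl.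
have L1 := QR1 HP; have L2 := QR2 HP; have L3 := QR3 HP; have L4 := QR4 HP.
have L5 := QR5 HP; have L5' := QR5' HP; have L6 := @QR6 T op e.
split; first exact: (ext_loop HP L1 L2 L3 L4 L5 L5').
split; first exact: ext_extends.
split; first by rewrite (ext_O3 HP L2).
have Ek : (Zp_trunc (kk T)).+2 = kk T by rewrite /Zp_trunc /kk; lia.
have HN : 0 < #|{set (T * T)}| by apply/card_gt0P; exists set0.
split; last split; last exact: (ext_gaps HP L6).
  rewrite card_sum card_prod card_sum !card_ord Ek.
  rewrite /kk; set M := _ + rr T; have : 0 < M by rewrite /M; apply: leq_trans (leq_addr _ _); apply/card_gt0P; exists set0.
  move=> HM; have : 25 <= (6 * (4 * #|T| + 4)).+1 by lia.
  move=> H25; have := leq_pmull ((6 * (4 * #|T| + 4)).+1) HM; lia.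
rewrite card_sum card_prod card_sum !card_ord Ek.
rewrite /kk /rr.
set N := #|{set (T * T)}|; set t := #|T|.
set r := (4 + 5 * (t + N)) %% 6.
have Hr : r = (4 + 5 * (t + N)) %% 6 by [].
set K := 4 * t + 4.
have -> : (N + r) * (6 * K).+1 = 6 * ((N + r) * K) + (N + r).
  by rewrite -addn1 mulnDr muln1 mulnA (mulnC (N + r) 6) mulnA.
set P := (N + r) * K.
lia.
Qed.
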